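(* Consider a tree power network $(\mathcal{V},\mathcal{E})$, $\mathcal{V}=\{1,\dots,n\}$, with fixed voltage magnitudes $|V_i|=\overline{V}_i>0$, angle limits $\underline{\theta}_{ik}\in[-\pi,0]$, $\overline{\theta}_{ik}\in[0,\pi]$ on each line, and bus power bounds $\underline{P}_i\le P_i\le\overline{P}_i$. Let $\mathcal{P}=\mathcal{P}_\theta\cap\mathcal{P}_P$ and suppose $\mathcal{P}\neq\emptyset$. Assume $$-\tan^{-1}\!\Big(\frac{b_{ik}}{g_{ik}}\Big)<\underline{\theta}_{ik}\le\overline{\theta}_{ik}<\tan^{-1}\!\Big(\frac{b_{ik}}{g_{ik}}\Big)\quad\text{for all }(i,k)\in\mathcal{E}.$$ Then: (1) for every $\mathbf{p}\in\mathcal{P}$ there exists a unique flow vector $\mathbf{f}\in\mathcal{F}_\theta$ with $\mathbf{A}\mathbf{f}=\mathbf{p}$; (2) $\mathcal{P}=\mathcal{O}(\mathcal{P})$; (3) $\mathcal{O}(\mathcal{P})=\mathcal{O}(\mathrm{conv}(\mathcal{P}))$.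
   Context: Each line $(i,k)\in\mathcal{E}$ has admittance $y_{ik}=g_{ik}-jb_{ik}$ with $g_{ik},b_{ik}\ge0$. For $\theta_{ik}=\theta_i-\theta_k$ (difference of bus voltage phases), the line flows are $P_{ik}=\overline{V}_i^2 g_{ik}+\overline{V}_i\overline{V}_k b_{ik}\sin\theta_{ik}-\overline{V}_i\overline{V}_k g_{ik}\cos\theta_{ik}$ and $P_{ki}=\overline{V}_k^2 g_{ik}-\overline{V}_i\overline{V}_k b_{ik}\sin\theta_{ik}-\overline{V}_i\overline{V}_k g_{ik}\cos\theta_{ik}$. The angle-constrained flow region of line $(i,k)$, $\mathcal{F}_{\theta_{ik}}\subset\mathbb{R}^2$, is the set of $(P_{ik},P_{ki})$ as $\theta_{ik}$ ranges over $[\underline{\theta}_{ik},\overline{\theta}_{ik}]$; $\mathcal{F}_\theta=\prod_{(i,k)\in\mathcal{E}}\mathcal{F}_{\theta_{ik}}\subset\mathbb{R}^{2|\mathcal{E}|}$. $\mathbf{A}$ is the $n\times2|\mathcal{E}|$ matrix with $A(i,(k,l))=1$ if $i=k$ and $0$ otherwise, so $(\mathbf{A}\mathbf{f})_i=\sum_{k\sim i}P_{ik}$ is the injection at bus $i$. $\mathcal{P}_\theta=\mathbf{A}\mathcal{F}_\theta$ and $\mathcal{P}_P=\{\mathbf{p}\in\mathbb{R}^n:\underline{P}_i\le P_i\le\overline{P}_i\ \forall i\}$. For $\mathcal{A}\subseteq\mathbb{R}^m$, $\mathcal{O}(\mathcal{A})$ is the set of Pareto-optimal points (points $x\in\mathcal{A}$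 such that no $y\in\mathcal{A}$ has $y\le x$ componentwise with strict inequality in some coordinate); $\mathrm{conv}$ denotes convex hull. *)

(* Defs.v *)
From HB Require Import structures.
From mathcomp Require Import all_boot all_order all_algebra.
From mathcomp Require Import all_classical all_reals all_analysis.
Set Implicit Arguments. Unset Strict Implicit. Unset Printing Implicit Defensive.
Import Order.TTheory GRing.Theory Num.Theory.
Local Open Scope ring_scope.
Local Open Scope classical_set_scope.

(* Buses are 'I_n; lines are 'I_m; line e joins (ends e).1 = i to
   (ends e).2 = k, i.e. it is the element (i,k) of E. *)

Section Graph.
Variables (n m : nat) (ends : 'I_m -> 'I_n * 'I_n).

Fixpoint trail (v : 'I_n) (es : seq 'I_m) (w : 'I_n) : Prop :=
  match es with
  | [::] => v = w
  | e :: es' => exists v' : 'I_n,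
      (ends e = (v, v') \/ ends e = (v', v)) /\ trail v' es' w
  end.

Definition connected_net : Prop := forall v w : 'I_n, exists es, trail v es w.

Definition acyclic_net : Prop :=
  forall (v : 'I_n) (es : seq 'I_m), es <> [::] -> uniq es -> ~ trail v es v.

Definition is_tree : Prop := connected_net /\ acyclic_net.
End Graph.

Section Flows.
Variable R : realType.

Definition Pik (Vi Vk g b th : R) : R :=
  Vi ^+ 2 * g + Vi * Vk * b * sin th - Vi * Vk * g * cos th.
Definition Pki (Vi Vk g b th : R) : R :=
  Vk ^+ 2 * g - Vi * Vk * b * sin th - Vi * Vk * g * cos th.

(* tan^{-1}(b/g), read as the angle of the point (g,b) (atan2 convention),
   so that g = 0, b > 0 gives pi/2. *)
Definition crit_angle (g b : R) : R :=
  if 0 < g then atan (b / g) else if 0 < b then pi / 2 else 0.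

Variables (n m : nat) (ends : 'I_m -> 'I_n * 'I_n).
Variables (V : 'I_n -> R) (g b lo hi : 'I_m -> R).

Definition line_flow (e : 'I_m) (th : R) : R * R :=
  (Pik (V (ends e).1) (V (ends e).2) (g e) (b e) th,
   Pki (V (ends e).1) (V (ends e).2) (g e) (b e) th).

Definition flow_region (e : 'I_m) : set (R * R) :=
  fun z => exists th : R, lo e <= th <= hi e /\ z = line_flow e th.

(* a flow vector f in R^{2|E|}: f e = (P_ik, P_ki) for e = (i,k) *)
Definition F_theta : set ('I_m -> R * R) :=
  fun f => forall e, flow_region e (f e).

Definition injection (f : 'I_m -> R * R) : 'I_n -> R :=
  fun i => \sum_(e < m | (ends e).1 == i) (f e).1
         + \sum_(e < m | (ends e).2 == i) (f e).2.

Definition P_theta : set ('I_n -> R) :=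
  fun p => exists f, F_theta f /\ injection f = p.
End Flows.

Definition P_box (R : realType) (n : nat) (Plo Phi : 'I_n -> R) : set ('I_n -> R) :=
  fun p => forall i, Plo i <= p i <= Phi i.

Definition pareto_set (R : realType) (n : nat) (A : set ('I_n -> R)) : set ('I_n -> R) :=
  fun x => A x /\ ~ (exists y, A y /\ (forall j, y j <= x j) /\ exists j, y j < x j).

Definition conv_hull (R : realType) (n : nat) (A : set ('I_n -> R)) : set ('I_n -> R) :=
  fun x => exists (k : nat) (w : 'I_k -> R) (xs : 'I_k -> 'I_n -> R),
    (forall i, 0 <= w i) /\ \sum_(i < k) w i = 1 /\ (forall i, A (xs i)) /\
    x = (fun j => \sum_(i < k) w i * xs i j).

(* Main.v *)
Require Import Defs.
From HB Require Import structures.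
From mathcomp Require Import all_boot all_order all_algebra.
From mathcomp Require Import all_classical all_reals all_analysis.
From mathcomp Require Import ring lra.
Import Order.TTheory GRing.Theory Num.Theory.
Import numFieldNormedType.Exports.
Set Implicit Arguments. Unset Strict Implicit.
Local Open Scope ring_scope.
Local Open Scope classical_set_scope.
Lemma crit_le (R : realType) (g b : R) : crit_angle g b <= pi / 2.
Proof.
rewrite /crit_angle; case: ifP => _; first exact/ltW/atan_ltpi2.
case: ifP => _ //. rewrite divr_ge0 // ?pi_ge0 //.
Qed.

Lemma key_pos (R : realType) (g b x : R) : 0 <= g -> 0 <= b ->
  - crit_angle g b < x < crit_angle g b ->
  0 < b * cos x + g * sin x /\ 0 < b * cos x - g * sin x.
Proof.
move=> g0 b0; rewrite /crit_angle; case: ifP => gp.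
  set a := atan (b / g) => /andP[h1 h2].
  have ha1 := atan_gtNpi2 (b / g). have ha2 := atan_ltpi2 (b / g). rewrite -/a in ha1 ha2.
  have ca : 0 < cos a by apply: cos_gt0_pihalf; rewrite ha1 ha2.
  have ta : tan a = b / g by rewrite /a atanK.
  have hs : g * sin a = b * cos a.
    have e : sin a = b / g * cos a by rewrite -ta /tan divfK ?gt_eqF.
    rewrite e; field; by rewrite gt_eqF.
  have pi2 : 0 < pi :> R by apply: pi_gt0.
  have e2 : pi = pi / 2 + pi / 2 :> R by field.
  have s1 : 0 < sin (a + x) by apply: sin_gt0_pi; apply/andP; split; lra.
  have s2 : 0 < sin (a - x) by apply: sin_gt0_pi; apply/andP; split; lra.
  move: s1 s2; rewrite sinD sinB.
  move=> s1 s2; split.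
  - have : 0 < g * (sin a * cos x + cos a * sin x) by apply: mulr_gt0.
    rewrite mulrDr mulrA hs => h. nra.
  - have : 0 < g * (sin a * cos x - cos a * sin x) by apply: mulr_gt0.
    rewrite mulrBr mulrA hs => h. nra.
case: ifP => bp /andP[h1 h2].
  have g00 : g = 0 by apply/eqP; rewrite eq_le g0 andbT leNgt gp.
  rewrite g00 !mul0r addr0 subr0.
  have := cos_gt0_pihalf (x:=x); rewrite h1 h2 => /(_ isT) c0.
  split; exact: mulr_gt0.
lra.
Qed.

Lemma Pik_diff (R : realType) (Vi Vk g b m d : R) :
  Pik Vi Vk g b (m + d) - Pik Vi Vk g b (m - d) =
  2 * (Vi * Vk) * sin d * (b * cos m + g * sin m).
Proof. rewrite /Pik sinD cosD sinB cosB; ring. Qed.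

Lemma Pki_diff (R : realType) (Vi Vk g b m d : R) :
  Pki Vi Vk g b (m + d) - Pki Vi Vk g b (m - d) =
  - (2 * (Vi * Vk) * sin d * (b * cos m - g * sin m)).
Proof. rewrite /Pki sinD cosD sinB cosB; ring. Qed.

Lemma flow_mono (R : realType) (Vi Vk g b x y : R) :
  0 < Vi -> 0 < Vk -> 0 <= g -> 0 <= b ->
  - crit_angle g b < x -> x < y -> y < crit_angle g b ->
  Pik Vi Vk g b x < Pik Vi Vk g b y /\ Pki Vi Vk g b y < Pki Vi Vk g b x.
Proof.
move=> Vi0 Vk0 g0 b0 hx hxy hy.
set m := (x + y) / 2; set d := (y - x) / 2.
have ex : x = m - d by rewrite /m /d; field.
have ey : y = m + d by rewrite /m /d; field.
have cl := crit_le g b.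
have [k1 k2] : 0 < b * cos m + g * sin m /\ 0 < b * cos m - g * sin m.
  apply: key_pos => //; apply/andP; split; rewrite /m; lra.
have sd : 0 < sin d.
  apply: sin_gt0_pihalf; apply/andP; split; rewrite /d; lra.
have VV : 0 < Vi * Vk by apply: mulr_gt0.
have P1 := Pik_diff Vi Vk g b m d. have P2 := Pki_diff Vi Vk g b m d.
rewrite -ex -ey in P1 P2.
have q1 : 0 < 2 * (Vi * Vk) * sin d * (b * cos m + g * sin m).
  by rewrite !mulr_gt0.
have q2 : 0 < 2 * (Vi * Vk) * sin d * (b * cos m - g * sin m).
  by rewrite !mulr_gt0.
split; lra.
Qed.

Lemma conv_id (R : realType) (Vi Vk g b x xb : R) :
  (b * cos xb - g * sin xb) * (Pik Vi Vk g b x - Pik Vi Vk g b xb) +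
  (b * cos xb + g * sin xb) * (Pki Vi Vk g b x - Pki Vi Vk g b xb) =
  2 * (Vi * Vk) * (b * g) * ((cos xb ^+ 2 + sin xb ^+ 2) -
     (cos xb * cos x + sin xb * sin x)).
Proof. rewrite /Pik /Pki; ring. Qed.

Lemma conv_ineq (R : realType) (Vi Vk g b x xb : R) :
  0 < Vi -> 0 < Vk -> 0 <= g -> 0 <= b ->
  0 <= (b * cos xb - g * sin xb) * (Pik Vi Vk g b x - Pik Vi Vk g b xb) +
  (b * cos xb + g * sin xb) * (Pki Vi Vk g b x - Pki Vi Vk g b xb).
Proof.
move=> Vi0 Vk0 g0 b0; rewrite conv_id.
apply: mulr_ge0; first by rewrite !mulr_ge0 // ltW.
have h1 := cos2Dsin2 x; have h2 := cos2Dsin2 xb.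
have -> : (cos xb ^+ 2 + sin xb ^+ 2) - (cos xb * cos x + sin xb * sin x) =
  ((cos xb - cos x) ^+ 2 + (sin xb - sin x) ^+ 2) / 2 +
  ((cos xb ^+ 2 + sin xb ^+ 2) - (cos x ^+ 2 + sin x ^+ 2)) / 2 by field.
rewrite h1 h2 subrr mul0r addr0; apply: divr_ge0 => //.
by apply: addr_ge0; apply: sqr_ge0.
Qed.

Lemma Pik_cont (R : realType) (Vi Vk g b : R) : continuous (Pik Vi Vk g b).
Proof.
have -> : Pik Vi Vk g b = (fun _ => Vi ^+ 2 * g) + (fun _ => Vi * Vk * b) \* sin
   - (fun _ => Vi * Vk * g) \* cos by apply/funext => x; rewrite /Pik.
move=> x; apply: continuousB; first apply: continuousD.
- exact: cst_continuous.
- apply: continuousM; [exact: cst_continuous | exact: continuous_sin].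
- apply: continuousM; [exact: cst_continuous | exact: continuous_cos].
Qed.

Lemma Pki_cont (R : realType) (Vi Vk g b : R) : continuous (Pki Vi Vk g b).
Proof.
have -> : Pki Vi Vk g b = (fun _ => Vk ^+ 2 * g) - (fun _ => Vi * Vk * b) \* sin
   - (fun _ => Vi * Vk * g) \* cos by apply/funext => x; rewrite /Pki.
move=> x; apply: continuousB; first apply: continuousB.
- exact: cst_continuous.
- apply: continuousM; [exact: cst_continuous | exact: continuous_sin].
- apply: continuousM; [exact: cst_continuous | exact: continuous_cos].
Qed.

Definition goodpair (R : realType) (lo hi : R) (c d : R -> R) : Prop :=
  continuous c /\ continuous d /\
  ((forall x y, lo <= x -> x < y -> y <= hi -> c x < c y /\ d y < d x) \/
   (forall x y, lo <= x -> x < y -> y <= hi -> c y < c x /\ d x < d y)) /\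
  (forall xb, lo <= xb <= hi -> exists N D, 0 < N /\ 0 < D /\
      forall x, 0 <= N * (c x - c xb) + D * (d x - d xb)).

Lemma goodpair_swap (R : realType) (lo hi : R) c d :
  goodpair lo hi c d -> goodpair lo hi d c.
Proof.
move=> [c1 [c2 [m cv]]]; split => //; split => //; split.
  by case: m => h; [right|left] => x y h1 h2 h3; have [] := h x y h1 h2 h3.
move=> xb hxb; have [N [D [N0 [D0 h]]]] := cv xb hxb.
exists D, N; split => //; split => // x; rewrite addrC; exact: h.
Qed.

Lemma line_good (R : realType) (Vi Vk g b lo hi : R) :
  0 < Vi -> 0 < Vk -> 0 <= g -> 0 <= b ->
  - crit_angle g b < lo -> lo <= hi -> hi < crit_angle g b ->
  goodpair lo hi (Pik Vi Vk g b) (Pki Vi Vk g b).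
Proof.
move=> Vi0 Vk0 g0 b0 hlo hlh hhi; split; first exact: Pik_cont.
split; first exact: Pki_cont.
split.
  left => x y h1 h2 h3; apply: flow_mono => //; lra.
move=> xb /andP[h1 h2].
have [k1 k2] := @key_pos R g b xb g0 b0 (ltac:(apply/andP; split; lra)).
exists (b * cos xb - g * sin xb), (b * cos xb + g * sin xb).
split => //; split => // x; exact: conv_ineq.
Qed.

Lemma gp_anti (R : realType) (lo hi : R) c d x y : goodpair lo hi c d ->
  lo <= x <= hi -> lo <= y <= hi -> c x <= c y -> d y <= d x.
Proof.
move=> [_ [_ [m _]]] /andP[x1 x2] /andP[y1 y2] hc.
case: (ltgtP x y) => [xy|yx|->//]; case: m => h.
- by have [_ /ltW] := h x y x1 xy y2.
- have [h1 _] := h x y x1 xy y2; lra.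
- have [h1 _] := h y x y1 yx x2; lra.
- by have [_ /ltW] := h y x y1 yx x2.
Qed.

Lemma gp_inj (R : realType) (lo hi : R) c d x y : goodpair lo hi c d ->
  lo <= x <= hi -> lo <= y <= hi -> (c x = c y \/ d x = d y) -> x = y.
Proof.
move=> [_ [_ [m _]]] /andP[x1 x2] /andP[y1 y2] hc.
case: (ltgtP x y) => [xy|yx|->//]; case: m => h.
- have [h1 h2] := h x y x1 xy y2; lra.
- have [h1 h2] := h x y x1 xy y2; lra.
- have [h1 h2] := h y x y1 yx x2; lra.
- have [h1 h2] := h y x y1 yx x2; lra.
Qed.

Lemma gp_mono (R : realType) (lo hi : R) c d : goodpair lo hi c d ->
  (forall x y, lo <= x -> x <= y -> y <= hi -> c x <= c y) \/
  (forall x y, lo <= x -> x <= y -> y <= hi -> c y <= c x).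
Proof.
move=> [_ [_ [m _]]]; case: m => h; [left|right] => x y h1 h2 h3;
  (have [->//|xy] := eqVneq x y);
  have xy' : x < y by rewrite lt_neqAle xy h2.
- by have [/ltW] := h x y h1 xy' h3.
- by have [/ltW] := h x y h1 xy' h3.
Qed.

Lemma gp_between (R : realType) (lo hi : R) c d a b x : goodpair lo hi c d ->
  lo <= a -> a <= x -> x <= b -> b <= hi ->
  (c a <= c x <= c b) \/ (c b <= c x <= c a).
Proof.
move=> /gp_mono [] h h1 h2 h3 h4; [left|right]; apply/andP; split;
 apply: h => //; lra.
Qed.

Lemma gp_ivt (R : realType) (lo hi : R) c d x1 x2 v : goodpair lo hi c d ->
  x1 <= x2 -> ((c x1 <= v <= c x2) \/ (c x2 <= v <= c x1)) ->
  exists2 x, x1 <= x <= x2 & c x = v.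
Proof.
move=> [cc _] le12 hv.
have cw : {within `[x1, x2], continuous c} by apply: continuous_subspaceT.
have := @IVT R c x1 x2 v le12 cw.
case => [|x]; last by rewrite in_itv /= => ? ?; exists x.
case: hv => /andP[h1 h2]; apply/andP; split.
- by rewrite ge_min h1.
- by rewrite le_max h2 orbT.
- by rewrite ge_min h1 orbT.
- by rewrite le_max h2.
Qed.
Fixpoint okp (n m : nat) (ends : 'I_m -> 'I_n * 'I_n) (E : {set 'I_m})
   (v : 'I_n) (ps : seq ('I_m * 'I_n)) : Prop :=
  match ps with
  | [::] => True
  | (e, w) :: ps' => e \in E /\ (ends e = (v, w) \/ ends e = (w, v)) /\ okp ends E w ps'
  end.

Lemma okp_ends n m (ends : 'I_m -> 'I_n * 'I_n) E v ps : okp ends E v ps ->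
  forall e, e \in map fst ps ->
  (ends e).1 \in v :: map snd ps /\ (ends e).2 \in v :: map snd ps.
Proof.
elim: ps v => [|[e w] ps IH] v //= [eE [he hok]] e'.
rewrite inE => /orP[/eqP ->|].
  by case: he => ->; split; rewrite /= !inE eqxx ?orbT.
move=> /(IH _ hok e') [h1 h2]; move: h1 h2; rewrite !inE => -> ->.
by rewrite !orbT.
Qed.

Lemma okp_trail n m (ends : 'I_m -> 'I_n * 'I_n) E v ps : okp ends E v ps ->
  forall x, x \in v :: map snd ps -> exists i, trail ends v (take i (map fst ps)) x.
Proof.
elim: ps v => [|[e w] ps IH] v /=.
  by move=> _ x; rewrite inE => /eqP ->; exists 0%N.
move=> [eE [he hok]] x; rewrite inE => /orP[/eqP ->|hx]; first by exists 0%N.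
have [i hi] := IH w hok x hx.
exists i.+1 => /=; exists w; split => //.
Qed.

Lemma okp_uniq n m (ends : 'I_m -> 'I_n * 'I_n) E v ps : okp ends E v ps ->
  uniq (v :: map snd ps) -> uniq (map fst ps).
Proof.
elim: ps v => [|[e w] ps IH] v //= [eE [he hok]] /andP[hv hu].
rewrite (IH w hok hu) andbT; apply/negP => /(okp_ends hok) [h1 h2].
by case: he => he; rewrite he /= in h1 h2; [rewrite h1 in hv | rewrite h2 in hv].
Qed.

Lemma leaf_exists n m (ends : 'I_m -> 'I_n * 'I_n) (E : {set 'I_m}) :
  acyclic_net ends -> (exists e0, e0 \in E) ->
  exists l k e, e \in E /\ (ends e = (l, k) \/ ends e = (k, l)) /\
    forall e', e' \in E -> ((ends e').1 = l \/ (ends e').2 = l) -> e' = e.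
Proof.
move=> acy [e0 e0E].
apply: contrapT => noleaf.
have noloop : forall e, (ends e).1 <> (ends e).2.
  move=> e h; apply: (acy (ends e).1 [:: e]) => //=.
  by exists (ends e).1; split => //; left; rewrite {2}h -surjective_pairing.
suff : forall L, exists v ps, okp ends E v ps /\ uniq (v :: map snd ps) /\
    size ps = L.+1.
  move=> /(_ n) [v [ps [_ [hu hs]]]].
  have := uniq_leq_size hu (fun x _ => mem_enum 'I_n x).
  by rewrite size_enum_ord /= size_map hs => /ltnW; rewrite ltnn.
elim => [|L [v [ps [hok [hu hs]]]]].
  exists (ends e0).1, [:: (e0, (ends e0).2)]; split.
    by split => //; split => //; left; rewrite -surjective_pairing.
  by split => //=; rewrite inE andbT; apply/eqP; exact: noloop.
case: ps hok hu hs => [//|[e1 v1] ps'] hok hu hs.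
have [[e' [e'E [e'inc e'ne]]]|nex] := pselect (exists e', e' \in E /\
    ((ends e').1 = v \/ (ends e').2 = v) /\ e' <> e1); last first.
  exfalso; apply: noleaf; exists v, v1, e1; case: hok => e1E [he1 _].
  split => //; split => // e' e'E inc; apply: contrapT => ne; apply: nex.
  by exists e'.
have [x hx] : exists x, ends e' = (v, x) \/ ends e' = (x, v).
  case: e'inc => h; [exists (ends e').2; left | exists (ends e').1; right];
    by rewrite -h -surjective_pairing.
have [xin|xnin] := boolP (x \in v :: map snd ((e1, v1) :: ps')).
  exfalso; have [i hi] := okp_trail hok xin.
  apply: (acy x (e' :: take i (map fst ((e1, v1) :: ps')))) => //=.
    rewrite take_uniq ?(okp_uniq hok hu) // andbT.
    apply/negP => /mem_take; rewrite inE => /orP[/eqP//|].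
    case: hok => _ [_ hok'] /(okp_ends hok') [h1 h2].
    move: hu => /= /andP[hv _].
    case: e'inc => h; [rewrite h in h1 | rewrite h in h2];
      by rewrite h1 in hv || rewrite h2 in hv.
  exists v; split => //; case: hx => ->; [right|left] => //.
exists x, ((e', v) :: (e1, v1) :: ps'); split.
  by split => //; split => //; case: hx => ->; [right|left].
split; last by move: hs => /= ->.
have -> : map snd ((e', v) :: (e1, v1) :: ps') = v :: map snd ((e1, v1) :: ps') by [].
by rewrite cons_uniq xnin hu.
Qed.
Lemma exists_min (R : realType) k (f : 'I_k -> R) : (0 < k)%N ->
  exists j, forall j', f j <= f j'.
Proof.
move=> k0; pose j0 := Ordinal k0.
exists (Order.arg_min j0 xpredT f); case: arg_minP => // j _ h j'; exact: h.
Qed.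
Lemma exists_max (R : realType) k (f : 'I_k -> R) : (0 < k)%N ->
  exists j, forall j', f j' <= f j.
Proof.
move=> k0; pose j0 := Ordinal k0.
exists (Order.arg_max j0 xpredT f); case: arg_maxP => // j _ h j'; exact: h.
Qed.
Definition pinj (R : realType) n m (ends : 'I_m -> 'I_n * 'I_n) (V : 'I_n -> R)
  (g b : 'I_m -> R) (E : {set 'I_m}) (th : 'I_m -> R) (v : 'I_n) : R :=
  \sum_(e < m | (e \in E) && ((ends e).1 == v)) (line_flow ends V g b e (th e)).1 +
  \sum_(e < m | (e \in E) && ((ends e).2 == v)) (line_flow ends V g b e (th e)).2.

Definition contrib (R : realType) n m (ends : 'I_m -> 'I_n * 'I_n) (V : 'I_n -> R)
  (g b : 'I_m -> R) (e : 'I_m) (x : R) (v : 'I_n) : R :=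
  (if (ends e).1 == v then (line_flow ends V g b e x).1 else 0) +
  (if (ends e).2 == v then (line_flow ends V g b e x).2 else 0).

Lemma sum_split1 (R : realType) m (E : {set 'I_m}) (Q : pred 'I_m) (F : 'I_m -> R) e :
  e \in E ->
  \sum_(i < m | (i \in E) && Q i) F i =
  \sum_(i < m | (i \in E :\ e) && Q i) F i + (if Q e then F e else 0).
Proof.
move=> eE; case: ifP => Qe.
  rewrite (bigD1 e) /=; [|by rewrite eE Qe].
  rewrite addrC; congr (_ + _); apply: eq_bigl => i.
  by rewrite in_setD1; case: (i \in E); case: (Q i); case: (i != e).
rewrite addr0; apply: eq_bigl => i; rewrite in_setD1.
by case: (eqVneq i e) => [->|]; rewrite ?Qe ?andbF.
Qed.

Lemma pinj_split (R : realType) n m (ends : 'I_m -> 'I_n * 'I_n) (V : 'I_n -> R) g b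
  (E : {set 'I_m}) th e v : e \in E ->
  pinj ends V g b E th v = pinj ends V g b (E :\ e) th v + contrib ends V g b e (th e) v.
Proof.
move=> eE; rewrite /pinj /contrib.
rewrite (sum_split1 (fun i : 'I_m => (ends i).1 == v) _ eE).
rewrite (sum_split1 (fun i : 'I_m => (ends i).2 == v) _ eE).
ring.
Qed.

Lemma pinj_ext (R : realType) n m (ends : 'I_m -> 'I_n * 'I_n) (V : 'I_n -> R) g b
  (E : {set 'I_m}) th th' : (forall e, e \in E -> th e = th' e) ->
  forall v, pinj ends V g b E th v = pinj ends V g b E th' v.
Proof.
move=> h v; rewrite /pinj; congr (_ + _); apply: eq_bigr => i /andP[iE _];
  by rewrite h.
Qed.

Lemma pinj_empty (R : realType) n m (ends : 'I_m -> 'I_n * 'I_n) (V : 'I_n -> R) g b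
  (E : {set 'I_m}) th : (forall e, e \notin E) ->
  forall v, pinj ends V g b E th v = 0.
Proof.
move=> h v; rewrite /pinj !big1 ?addr0 // => i /andP[iE _]; by rewrite (negbTE (h i)) in iE.
Qed.

Lemma pinj_leaf (R : realType) n m (ends : 'I_m -> 'I_n * 'I_n) (V : 'I_n -> R) g b
  (E : {set 'I_m}) th l e :
  (forall e', e' \in E -> ((ends e').1 = l \/ (ends e').2 = l) -> e' = e) ->
  pinj ends V g b (E :\ e) th l = 0.
Proof.
move=> h; rewrite /pinj !big1 ?addr0 // => i; rewrite in_setD1 => /andP[/andP[ne iE] /eqP hi];
  by rewrite (h i iE (ltac:(by [left|right]))) eqxx in ne.
Qed.

Lemma contrib_leaf (R : realType) n m (ends : 'I_m -> 'I_n * 'I_n) (V : 'I_n -> R) g b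
  (lo hi : 'I_m -> R) e l k :
  (forall e, goodpair (lo e) (hi e) (fun x => (line_flow ends V g b e x).1)
                                  (fun x => (line_flow ends V g b e x).2)) ->
  (ends e = (l, k) \/ ends e = (k, l)) -> l != k ->
  exists c d, goodpair (lo e) (hi e) c d /\
    (forall x, contrib ends V g b e x l = c x) /\
    (forall x, contrib ends V g b e x k = d x) /\
    (forall x v, v != l -> v != k -> contrib ends V g b e x v = 0).
Proof.
move=> GP he lk; rewrite /contrib.
case: he => ->; rewrite /=.
- exists (fun x => (line_flow ends V g b e x).1), (fun x => (line_flow ends V g b e x).2).
  split; first exact: GP.
  split; first by move=> x; rewrite eqxx eq_sym (negbTE lk) addr0.
  split; first by move=> x; rewrite eqxx (negbTE lk) add0r.
  by move=> x v h1 h2; rewrite [l == v]eq_sym [k == v]eq_sym (negbTE h1) (negbTE h2) addr0.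
- exists (fun x => (line_flow ends V g b e x).2), (fun x => (line_flow ends V g b e x).1).
  split; first exact/goodpair_swap/GP.
  split; first by move=> x; rewrite eqxx eq_sym (negbTE lk) add0r.
  split; first by move=> x; rewrite eqxx (negbTE lk) addr0.
  by move=> x v h1 h2; rewrite [l == v]eq_sym [k == v]eq_sym (negbTE h1) (negbTE h2) addr0.
Qed.
Lemma noloop n m (ends : 'I_m -> 'I_n * 'I_n) e x y : acyclic_net ends ->
  (ends e = (x, y) \/ ends e = (y, x)) -> x != y.
Proof.
move=> acy he; apply/eqP => xy; subst y.
apply: (acy x [:: e]) => //=; exists x; split => //; by case: he; left.
Qed.

Lemma uniqE (R : realType) n m (ends : 'I_m -> 'I_n * 'I_n) (V : 'I_n -> R)
  (g b lo hi : 'I_m -> R) :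
  acyclic_net ends ->
  (forall e, goodpair (lo e) (hi e) (fun x => (line_flow ends V g b e x).1)
                                  (fun x => (line_flow ends V g b e x).2)) ->
  forall (E : {set 'I_m}) th th',
  (forall e, lo e <= th e <= hi e) -> (forall e, lo e <= th' e <= hi e) ->
  (forall v, pinj ends V g b E th' v <= pinj ends V g b E th v) ->
  forall e, e \in E -> th' e = th e.
Proof.
move=> acy GP E; move: {2}#|E| (erefl #|E|) => N.
elim: N E => [|N IH] E hN th th' hth hth' hle.
  by move=> e; rewrite (cards0_eq hN) inE.
have : (0 < #|E|)%N by rewrite hN.
rewrite card_gt0 => /set0Pn [e0 e0E].
have [l [k [e [eE [he hleaf]]]]] := leaf_exists acy (ex_intro _ e0 e0E).
have lk := noloop acy he.
have [c [d [gp [hcl [hdk hz]]]]] := contrib_leaf GP he lk.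
have hN' : #|E :\ e| = N by move: hN; rewrite (cardsD1 e) eE add1n => -[].
have sp := fun th v => pinj_split ends V g b th v eE.
have pl := fun th => pinj_leaf V g b th hleaf.
have c1 : c (th' e) <= c (th e).
  by move: (hle l); rewrite !sp !pl !add0r !hcl.
have d1 := gp_anti gp (hth' e) (hth e) c1.
have IHa : forall e1, e1 \in E :\ e -> th' e1 = th e1.
  apply: (IH _ hN' th th' hth hth') => v.
  have [->|vl] := eqVneq v l; first by rewrite !pl.
  have [->|vk] := eqVneq v k.
    by move: (hle k); rewrite !sp !hdk; lra.
  by move: (hle v); rewrite !sp !(hz _ _ vl vk) !addr0.
have ek : d (th' e) <= d (th e).
  move: (hle k); rewrite !sp !hdk (pinj_ext ends V g b (th:=th') (th':=th) IHa); lra.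
have ee : th' e = th e.
  by apply: (gp_inj gp (hth' e) (hth e)); right; apply/eqP; rewrite eq_le ek d1.
move=> e1 e1E; have [->//|ne] := eqVneq e1 e.
by apply: IHa; rewrite in_setD1 ne e1E.
Qed.
Lemma avg_ge (R : realType) k (w : 'I_k -> R) (f : 'I_k -> R) a :
  (forall j, 0 <= w j) -> \sum_(j < k) w j = 1 -> (forall j, a <= f j) ->
  a <= \sum_(j < k) w j * f j.
Proof.
move=> hw hw1 hf; have -> : a = \sum_(j < k) w j * a by rewrite -mulr_suml hw1 mul1r.
by apply: ler_sum => j _; apply: ler_wpM2l.
Qed.

Lemma avg_le (R : realType) k (w : 'I_k -> R) (f : 'I_k -> R) a :
  (forall j, 0 <= w j) -> \sum_(j < k) w j = 1 -> (forall j, f j <= a) ->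
  \sum_(j < k) w j * f j <= a.
Proof.
move=> hw hw1 hf; have -> : a = \sum_(j < k) w j * a by rewrite -mulr_suml hw1 mul1r.
by apply: ler_sum => j _; apply: ler_wpM2l.
Qed.

Lemma avg_sub (R : realType) k (w : 'I_k -> R) (f h : 'I_k -> R) :
  \sum_(j < k) w j * (f j - h j) = \sum_(j < k) w j * f j - \sum_(j < k) w j * h j.
Proof. rewrite -sumrB; apply: eq_bigr => j _; ring. Qed.

Lemma avg_lin2 (R : realType) k (w : 'I_k -> R) (f h : 'I_k -> R) N D p q :
  \sum_(j < k) w j = 1 ->
  \sum_(j < k) w j * (N * (f j - p) + D * (h j - q)) =
  N * (\sum_(j < k) w j * f j - p) + D * (\sum_(j < k) w j * h j - q).
Proof.
move=> hw1.
rewrite (eq_bigr (fun j => N * (w j * f j) + D * (w j * h j) - (N * p + D * q) * w j));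
  last by move=> j _; ring.
rewrite sumrB big_split /= -!mulr_sumr hw1; ring.
Qed.

Lemma avg_zero (R : realType) k (w : 'I_k -> R) (f : 'I_k -> R) :
  (forall j, f j = 0) -> \sum_(j < k) w j * f j = 0.
Proof. by move=> h; rewrite big1 // => j _; rewrite h mulr0. Qed.

Lemma k_pos (R : realType) k (w : 'I_k -> R) : \sum_(j < k) w j = 1 -> (0 < k)%N.
Proof.
move=> hw1; rewrite lt0n; apply/negP => /eqP k0.
move: hw1; rewrite big1 => [/eqP|j _]; first by rewrite eq_sym oner_eq0.
by move: (leq_trans (ltn_ord j) (eq_leq k0)); rewrite ltn0.
Qed.
Lemma mainM (R : realType) n m (ends : 'I_m -> 'I_n * 'I_n) (V : 'I_n -> R)
  (g b lo hi : 'I_m -> R) :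
  acyclic_net ends ->
  (forall e, goodpair (lo e) (hi e) (fun x => (line_flow ends V g b e x).1)
                                  (fun x => (line_flow ends V g b e x).2)) ->
  (forall e, lo e <= hi e) ->
  forall k (w : 'I_k -> R) (ths : 'I_k -> 'I_m -> R),
  (forall j, 0 <= w j) -> \sum_(j < k) w j = 1 ->
  (forall j e, lo e <= ths j e <= hi e) ->
  forall (E : {set 'I_m}) (L U : 'I_n -> R),
  (forall j v, L v <= pinj ends V g b E (ths j) v) ->
  (forall v, \sum_(j < k) w j * pinj ends V g b E (ths j) v <= U v) ->
  exists th, (forall e, lo e <= th e <= hi e) /\
    forall v, L v <= pinj ends V g b E th v <= U v.
Proof.
move=> acy GP lohi k w ths hw hw1 hths E.
have k0 := k_pos hw1.
pose j0 := Ordinal k0.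
have LU : forall E L U, (forall j v, L v <= pinj ends V g b E (ths j) v) ->
  (forall v, \sum_(j < k) w j * pinj ends V g b E (ths j) v <= U v) ->
  forall v, L v <= U v.
  move=> E1 L U hL hU v; apply: le_trans (hU v); apply: avg_ge => // j; exact: hL.
move: {2}#|E| (erefl #|E|) => N.
elim: N E => [|N IH] E hN L U hL hU.
  have emp : forall e, e \notin E by move=> e; rewrite (cards0_eq hN) inE.
  exists lo; split; first by move=> e; rewrite lexx lohi.
  move=> v; rewrite (pinj_empty ends V g b lo emp v).
  have := hL j0 v; rewrite (pinj_empty ends V g b _ emp v) => -> /=.
  have := hU v; rewrite avg_zero // => j; exact: pinj_empty.
have : (0 < #|E|)%N by rewrite hN.
rewrite card_gt0 => /set0Pn [e0 e0E].
have [l [kk [e [eE [he hleaf]]]]] := leaf_exists acy (ex_intro _ e0 e0E).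
have lk := noloop acy he.
have [c [d [gp [hcl [hdk hz]]]]] := contrib_leaf GP he lk.
have hN' : #|E :\ e| = N by move: hN; rewrite (cardsD1 e) eE add1n => -[].
have sp := fun th v => pinj_split ends V g b th v eE.
have pl := fun th => pinj_leaf V g b th hleaf.
have Pl : forall th, pinj ends V g b E th l = c (th e).
  by move=> th; rewrite sp pl add0r hcl.
have Pk : forall th, pinj ends V g b E th kk = pinj ends V g b (E :\ e) th kk + d (th e).
  by move=> th; rewrite sp hdk.
have Po : forall th v, v != l -> v != kk ->
    pinj ends V g b E th v = pinj ends V g b (E :\ e) th v.
  by move=> th v h1 h2; rewrite sp hz // addr0.
have [jm hjm] := exists_min (fun j => c (ths j e)) k0.
have [jM hjM] := exists_max (fun j => c (ths j e)) k0.
set a := ths jm e.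
set cbar := \sum_(j < k) w j * c (ths j e).
have cbar1 : c a <= cbar by apply: avg_ge.
have cbar2 : cbar <= c (ths jM e) by apply: avg_le.
have [bb hbb cbb] : exists2 bb, lo e <= bb <= hi e & c bb = cbar.
  have hv : c a <= cbar <= c (ths jM e) by rewrite cbar1 cbar2.
  have [h12|h21] := leP a (ths jM e).
    have [x /andP[x1 x2] cx] := gp_ivt (v:=cbar) gp h12 (or_introl hv).
    exists x => //; have := hths jm e; have := hths jM e; rewrite -/a; lra.
  have [x /andP[x1 x2] cx] := gp_ivt (v:=cbar) gp (ltW h21) (or_intror hv).
  exists x => //; have := hths jm e; have := hths jM e; rewrite -/a; lra.
have dbar : d bb <= \sum_(j < k) w j * d (ths j e).
  have [N0 [D0 [Np [Dp hcv]]]] := gp.2.2.2 bb hbb.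
  have : 0 <= \sum_(j < k) w j * (N0 * (c (ths j e) - c bb) + D0 * (d (ths j e) - d bb)).
    by apply: sumr_ge0 => j _; apply: mulr_ge0.
  rewrite avg_lin2 // -/cbar cbb subrr mulr0 add0r pmulr_rge0 //.
  by rewrite subr_ge0.
have hLl : L l <= c a by move: (hL jm l); rewrite Pl.
have hUl : cbar <= U l.
  by move: (hU l); rewrite (eq_bigr (fun j => w j * c (ths j e))) // => j _; rewrite Pl.
set L' := fun v => L v - contrib ends V g b e a v.
set U' := fun v => U v - contrib ends V g b e bb v.
have [th' [hth' hb']] : exists th, (forall e, lo e <= th e <= hi e) /\
    forall v, L' v <= pinj ends V g b (E :\ e) th v <= U' v.
  apply: (IH _ hN').
    move=> j v; rewrite /L'.
    have [->|vl] := eqVneq v l; first by rewrite pl hcl; lra.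
    have [->|vk] := eqVneq v kk.
      rewrite hdk; have := hL j kk; rewrite Pk.
      have := gp_anti gp (hths jm e) (hths j e) (hjm j); rewrite -/a; lra.
    by rewrite hz // subr0 -Po //; apply: hL.
  move=> v; rewrite /U'.
  have [->|vl] := eqVneq v l.
    by rewrite avg_zero => [|j]; [rewrite hcl cbb subr_ge0 | rewrite pl].
  have [->|vk] := eqVneq v kk.
    rewrite hdk (eq_bigr (fun j => w j * (pinj ends V g b E (ths j) kk - d (ths j e))));
      last by move=> j _; rewrite Pk; congr (_ * _); ring.
    rewrite avg_sub; have := hU kk; lra.
  rewrite hz // subr0 (eq_bigr (fun j => w j * pinj ends V g b E (ths j) v)) ?hU //.
  by move=> j _; rewrite Po.
have LUk := LU E L U hL hU kk.
have /andP[hbk1 hbk2] := hb' kk; rewrite /L' /U' !hdk in hbk1 hbk2.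
set low := L kk - pinj ends V g b (E :\ e) th' kk.
set up := U kk - pinj ends V g b (E :\ e) th' kk.
have [x [hxr [hxd hxc]]] : exists x, lo e <= x <= hi e /\ low <= d x <= up /\
    L l <= c x <= U l.
  have cb : forall x, (a <= x <= bb) || (bb <= x <= a) -> L l <= c x <= U l.
    have /andP[ha1 ha2] := hths jm e; have /andP[hb1 hb2] := hbb.
    move=> x /orP[] /andP[h1 h2].
      by have := gp_between gp ha1 h1 h2 hb2; rewrite -/a; case=> /andP[] ? ?;
        apply/andP; split; lra.
    by have := gp_between gp hb1 h1 h2 ha2; rewrite -/a; case=> /andP[] ? ?;
        apply/andP; split; lra.
  have [hbl|hbl] := leP low (d bb).
    exists bb; split => //; split; first by rewrite /up; lra.
    by apply: cb; rewrite lexx andbT orbC; apply/orP; case: (leP a bb) => h;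
       [right|left]; rewrite ?h // ltW.
  have hv : d bb <= low <= d a by move: hbl; rewrite /low => hbl; apply/andP; split; lra.
  have [h12|h21] := leP a bb.
    have [x /andP[x1 x2] dx] := gp_ivt (v:=low) (goodpair_swap gp) h12 (or_intror hv).
    exists x; split; first by have := hths jm e; case/andP: hbb; rewrite -/a; lra.
    split; first by rewrite dx /low /up; lra.
    by apply: cb; rewrite x1 x2.
  have [x /andP[x1 x2] dx] := gp_ivt (v:=low) (goodpair_swap gp) (ltW h21) (or_introl hv).
  exists x; split; first by have := hths jm e; case/andP: hbb; rewrite -/a; lra.
  split; first by rewrite dx /low /up; lra.
  by apply: cb; rewrite x1 x2 orbT.
exists (fun e1 => if e1 == e then x else th' e1); split.
  by move=> e1; case: ifP => // /eqP ->.
have ext : forall v, pinj ends V g b (E :\ e) (fun e1 => if e1 == e then x else th' e1) v =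
    pinj ends V g b (E :\ e) th' v.
  apply: pinj_ext => e1; rewrite in_setD1 => /andP[ne _]; by rewrite (negbTE ne).
move=> v; rewrite sp ext eqxx.
have [->|vl] := eqVneq v l; first by rewrite pl hcl add0r.
have [->|vk] := eqVneq v kk.
  rewrite hdk; apply/andP; split; move: hxd; rewrite /low /up; case/andP; lra.
rewrite hz // addr0; have := hb' v.
by rewrite /L' /U' (hz a v vl vk) (hz bb v vl vk) !subr0.
Qed.
Lemma Ftheta_th (R : realType) n m (ends : 'I_m -> 'I_n * 'I_n) (V : 'I_n -> R)
  (g b lo hi : 'I_m -> R) f : F_theta ends V g b lo hi f ->
  exists th, (forall e, lo e <= th e <= hi e) /\
     injection ends f = pinj ends V g b [set: 'I_m]%SET th.
Proof.
move=> hf; have [th hth] := choice hf.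
exists th; split; first by move=> e; have [] := hth e.
apply: funext => v; rewrite /injection /pinj.
congr (_ + _); apply: eq_big => e; rewrite ?inE //= => _;
  by have [_ ->] := hth e.
Qed.

Lemma Ptheta_th (R : realType) n m (ends : 'I_m -> 'I_n * 'I_n) (V : 'I_n -> R)
  (g b lo hi : 'I_m -> R) p : P_theta ends V g b lo hi p ->
  exists th, (forall e, lo e <= th e <= hi e) /\ p = pinj ends V g b [set: 'I_m]%SET th.
Proof.
move=> [f [hf <-]]; exact: Ftheta_th.
Qed.

Lemma th_Ptheta (R : realType) n m (ends : 'I_m -> 'I_n * 'I_n) (V : 'I_n -> R)
  (g b lo hi : 'I_m -> R) th : (forall e, lo e <= th e <= hi e) ->
  P_theta ends V g b lo hi (pinj ends V g b [set: 'I_m]%SET th).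
Proof.
move=> hth; exists (fun e => line_flow ends V g b e (th e)); split.
  by move=> e; exists (th e); split.
apply: funext => v; rewrite /injection /pinj.
by congr (_ + _); apply: eq_bigl => e; rewrite inE.
Qed.

Lemma PT_le (R : realType) n m (ends : 'I_m -> 'I_n * 'I_n) (V : 'I_n -> R)
  (g b lo hi : 'I_m -> R) :
  acyclic_net ends ->
  (forall e, goodpair (lo e) (hi e) (fun x => (line_flow ends V g b e x).1)
                                  (fun x => (line_flow ends V g b e x).2)) ->
  forall x y, P_theta ends V g b lo hi x -> P_theta ends V g b lo hi y ->
  (forall j, y j <= x j) -> y = x.
Proof.
move=> acy GP x y /Ptheta_th [thx [hx ->]] /Ptheta_th [thy [hy ->]] hle.
apply: funext; apply: pinj_ext => e _.
exact: (uniqE acy GP hx hy hle).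
Qed.

Lemma conv_below (R : realType) n m (ends : 'I_m -> 'I_n * 'I_n) (V : 'I_n -> R)
  (g b lo hi : 'I_m -> R) (Plo Phi : 'I_n -> R) :
  acyclic_net ends ->
  (forall e, goodpair (lo e) (hi e) (fun x => (line_flow ends V g b e x).1)
                                  (fun x => (line_flow ends V g b e x).2)) ->
  (forall e, lo e <= hi e) ->
  forall y, conv_hull (P_theta ends V g b lo hi `&` P_box Plo Phi) y ->
  exists z, (P_theta ends V g b lo hi `&` P_box Plo Phi) z /\ forall j, z j <= y j.
Proof.
move=> acy GP lohi y [k [w [xs [hw [hw1 [hxs ->]]]]]].
have [ths hths] := choice (fun i => Ptheta_th (hxs i).1).
have hb : forall i e, lo e <= ths i e <= hi e by move=> i e; have [] := hths i.
have ex : forall i, xs i = pinj ends V g b [set: 'I_m]%SET (ths i).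
  by move=> i; have [] := hths i.
have hL : forall j v, Plo v <= pinj ends V g b [set: 'I_m]%SET (ths j) v.
  by move=> j v; rewrite -ex; have /andP[h _] := (hxs j).2 v.
have hU : forall v, \sum_(j < k) w j * pinj ends V g b [set: 'I_m]%SET (ths j) v
    <= \sum_(i < k) w i * xs i v.
  by move=> v; apply: ler_sum => i _; rewrite ex lexx.
have [th [hth hbd]] := mainM acy GP lohi hw hw1 hb hL hU.
exists (pinj ends V g b [set: 'I_m]%SET th); split; last first.
  by move=> j; have /andP[] := hbd j.
split; first exact: th_Ptheta.
move=> j; have /andP[h1 h2] := hbd j; rewrite h1 /=.
apply: le_trans h2 _; apply: avg_le => // i.
by have /andP[] := (hxs i).2 j.
Qed.
Lemma inj_eq (R : realType) n m (ends : 'I_m -> 'I_n * 'I_n) (V : 'I_n -> R)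
  (g b : 'I_m -> R) f th : (forall e, f e = line_flow ends V g b e (th e)) ->
  injection ends f = pinj ends V g b [set: 'I_m]%SET th.
Proof.
move=> hth; apply: funext => v; rewrite /injection /pinj.
congr (_ + _); apply: eq_big => e; rewrite ?inE //= => _; by rewrite hth.
Qed.
Unset Implicit Arguments.
Theorem theorem1 (R : realType) (n m : nat) (ends : 'I_m -> 'I_n * 'I_n)
  (V : 'I_n -> R) (g b lo hi : 'I_m -> R) (Plo Phi : 'I_n -> R) :
  is_tree ends ->
  (forall i, 0 < V i) ->
  (forall e, 0 <= g e) -> (forall e, 0 <= b e) ->
  (forall e, - pi <= lo e <= 0) -> (forall e, 0 <= hi e <= pi) ->
  let P := P_theta ends V g b lo hi `&` P_box Plo Phi in
  P !=set0 ->
  (forall e, - crit_angle (g e) (b e) < lo e /\ lo e <= hi e /\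
             hi e < crit_angle (g e) (b e)) ->
  (forall p, P p -> exists! f, F_theta ends V g b lo hi f /\ injection ends f = p)
  /\ P = pareto_set P
  /\ pareto_set P = pareto_set (conv_hull P).
Proof.
move=> [_ acy] V0 g0 b0 _ _ P _ hang.
have GP : forall e, goodpair (lo e) (hi e) (fun x => (line_flow ends V g b e x).1)
                                  (fun x => (line_flow ends V g b e x).2).
  move=> e; have [h1 [h2 h3]] := hang e.
  exact: (line_good (V0 _) (V0 _) (g0 e) (b0 e) h1 h2 h3).
have lohi : forall e, lo e <= hi e by move=> e; have [_ []] := hang e.
have H2 : P = pareto_set P.
  apply: funext => x; apply: propext; split; last by case.
  move=> hx; split => // -[y [hy [hyx [j hj]]]].
  have := PT_le acy GP hx.1 hy.1 hyx => yx.
  by rewrite yx ltxx in hj.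
split.
  move=> p [hp hpb]; have [f [hf hfp]] := hp.
  exists f; split => // f' [hf' hf'p].
  have [th hth] := choice hf. have [th' hth'] := choice hf'.
  have bth : forall e, lo e <= th e <= hi e by move=> e; have [] := hth e.
  have bth' : forall e, lo e <= th' e <= hi e by move=> e; have [] := hth' e.
  have e1 := inj_eq (fun e => (hth e).2). have e2 := inj_eq (fun e => (hth' e).2).
  have eq : forall e, e \in [set: 'I_m]%SET -> th' e = th e.
    apply: (uniqE acy GP bth bth') => v.
    by rewrite -e1 -e2 hfp hf'p.
  apply: funext => e; rewrite (hth e).2 (hth' e).2 eq // inE.
split => //.
rewrite -H2; apply: funext => x; apply: propext; split.
  move=> hx; split.
    exists 1%N, (fun=> 1), (fun=> x); split => //; split; first by rewrite big_ord1.
    split => //; apply: funext => j; by rewrite big_ord1 mul1r.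
  move=> [y [hy [hyx [j hj]]]].
  have [z [hz hzy]] := conv_below acy GP lohi hy.
  have zx : z = x by apply: (PT_le acy GP hx.1 hz.1) => i; exact: le_trans (hzy i) (hyx i).
  by have := hzy j; rewrite zx => h; have := lt_le_trans hj h; rewrite ltxx.
move=> [hy hpar].
have [z [hz hzy]] := conv_below acy GP lohi hy.
have zy : z = x.
  apply: funext => j; apply/eqP; rewrite eq_le hzy /=; rewrite leNgt; apply/negP => hj.
  apply: hpar; exists z; split; last by split => //; exists j.
  exists 1%N, (fun=> 1), (fun=> z); split => //; split; first by rewrite big_ord1.
  split => //; apply: funext => i; by rewrite big_ord1 mul1r.
by rewrite -zy.
Qed.
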